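(* With the notation and hypotheses of the average bit error rate $\overline{P}_{er}(\bar\gamma)$ (any $m_X,m_Y,\Omega_X,\Omega_Y,\alpha>0$, $\delta_1>0$, $\delta_3\in\mathbb{N}$, $\delta_{2,j}>0$), the diversity order is $$\mathcal{G}_d:=-\lim_{\bar\gamma\to\infty}\frac{\ln\overline{P}_{er}(\bar\gamma)}{\ln\bar\gamma}=\frac{\alpha}{2}m_X,$$ in particular it does not depend on $m_Y$, $\Omega_X$, $\Omega_Y$.
   Context: Fix parameters $m_X,m_Y,\Omega_X,\Omega_Y>0$. The Beaulieu–Xie shadowed envelope is a random variable $\bar R>0$ with density $$f_{\bar R}(r)=\frac{2r^{2m_X-1}}{\Gamma(m_X)}\left(\frac{m_Y\Omega_X}{m_Y\Omega_X+m_X\Omega_Y}\right)^{m_Y}\left(\frac{m_X}{\Omega_X}\right)^{m_X}{}_1F_1\!\left(m_Y;m_X;\frac{m_X^2\Omega_Y r^2}{\Omega_X(m_Y\Omega_X+m_X\Omega_Y)}\right)e^{-\frac{m_X}{\Omega_X}r^2},\quad r>0.$$ For $\alpha>0$ put $$\mathrm{C}_\alpha=\left[\frac{\Gamma(m_X)}{\Gamma(m_X+\frac{2}{\alpha})\,{}_2F_1\!\left(m_Y,-\frac{2}{\alpha};m_X;-\frac{m_X\Omega_Y}{m_Y\Omega_X}\right)}\right]^{\alpha/2}.$$ For $\bar\gamma>0$, the instantaneous SNR of the $\alpha$-Beaulieu–Xie shadowed channel with average SNR $\bar\gamma$ is the random variable $\gamma=\bar\gamma\,\big(\mathrm{C}_\alpha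 m_X\bar R^2/\Omega_X\big)^{2/\alpha}$, and the average bit error rate is $\overline{P}_{er}(\bar\gamma)=\delta_1\sum_{j=1}^{\delta_3}\mathbb{E}\big[Q(\sqrt{2\delta_{2,j}\gamma})\big]$ with $Q(x)=\frac{1}{\sqrt{2\pi}}\int_x^\infty e^{-t^2/2}dt$. Here ${}_1F_1(a;b;z)=\sum_{n\ge0}\frac{(a)_n}{(b)_n}\frac{z^n}{n!}$, ${}_2F_1$ is the Gauss hypergeometric function. *)

(* Defs.v *)
From Stdlib Require Import Reals Factorial.
From Coquelicot Require Import Coquelicot.
Open Scope R_scope.

Fixpoint poch (a : R) (n : nat) : R :=
  match n with
  | O => 1
  | S k => poch a k * (a + INR k)
  end.

Definition Gamma (x : R) : R :=
  RInt_gen (fun t => Rpower t (x - 1) * exp (- t))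
           (at_right 0) (Rbar_locally p_infty).

Definition hyp1F1 (a b z : R) : R :=
  Series (fun n => poch a n / poch b n * z ^ n / INR (fact n)).

Definition hyp2F1_series (a b c z : R) : R :=
  Series (fun n => poch a n * poch b n / poch c n * z ^ n / INR (fact n)).

(* Gauss hypergeometric function 2F1(a,b;c;z): the series for |z| < 1, and
   for z <= -1 its analytic continuation given by the Pfaff transformation
   2F1(a,b;c;z) = (1-z)^(-b) 2F1(c-a,b;c;z/(z-1)), where z/(z-1) in [1/2,1).
   (Values for z >= 1 are not used.) *)
Definition hyp2F1 (a b c z : R) : R :=
  if Rlt_dec (Rabs z) 1 then hyp2F1_series a b c z
  else if Rle_dec z (-1) then
    Rpower (1 - z) (- b) * hyp2F1_series (c - a) b c (z / (z - 1))
  else 0.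

Definition Qfun (x : R) : R :=
  / sqrt (2 * PI) *
  RInt_gen (fun t => exp (- (t ^ 2) / 2)) (at_point x) (Rbar_locally p_infty).

Definition bx_pdf (mX mY OX OY r : R) : R :=
  2 * Rpower r (2 * mX - 1) / Gamma mX
  * Rpower (mY * OX / (mY * OX + mX * OY)) mY
  * Rpower (mX / OX) mX
  * hyp1F1 mY mX (mX ^ 2 * OY * r ^ 2 / (OX * (mY * OX + mX * OY)))
  * exp (- (mX / OX) * r ^ 2).

Definition C_alpha (mX mY OX OY alpha : R) : R :=
  Rpower (Gamma mX /
          (Gamma (mX + 2 / alpha)
           * hyp2F1 mY (- (2 / alpha)) mX (- (mX * OY / (mY * OX)))))
         (alpha / 2).

Definition snr (mX mY OX OY alpha gbar r : R) : R :=
  gbar * Rpower (C_alpha mX mY OX OY alpha * mX * r ^ 2 / OX) (2 / alpha).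

Definition EQ (mX mY OX OY alpha gbar d : R) : R :=
  RInt_gen (fun r => Qfun (sqrt (2 * d * snr mX mY OX OY alpha gbar r))
                     * bx_pdf mX mY OX OY r)
           (at_right 0) (Rbar_locally p_infty).

Definition Pber (mX mY OX OY alpha d1 : R) (d3 : nat) (d2 : nat -> R)
  (gbar : R) : R :=
  d1 * sum_n_m (fun j => EQ mX mY OX OY alpha gbar (d2 j)) 1 d3.

(* Main.v *)
Require Import Defs.
From Stdlib Require Import Reals Lra Psatz ZArith.
From Coquelicot Require Import Coquelicot.
Open Scope R_scope.

Lemma improper_sup (f : R -> R) (A : R -> Prop) (Fa : (R -> Prop) -> Prop) (M : R) :
  (forall a0, A a0 -> Fa (fun a => A a /\ a <= a0)) ->
  (exists a0, A a0) ->
  (forall a t, A a -> a <= t -> 0 <= f t) ->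
  (forall a b, A a -> a <= b -> ex_RInt f a b) ->
  (forall a b, A a -> a <= b -> RInt f a b <= M) ->
  exists l, is_RInt_gen f Fa (Rbar_locally p_infty) l /\ l <= M /\
     (forall a b, A a -> a <= b -> RInt f a b <= l).
Proof.
  intros HF [a1 Ha1] Hpos Hex HM.
  set (E := fun y => exists a b, A a /\ a <= b /\ y = RInt f a b).
  assert (HE : bound E).
  { exists M. intros y [a [b [Ha [Hab ->]]]]. now apply HM. }
  assert (HE2 : exists y, E y).
  { exists (RInt f a1 a1). exists a1, a1. repeat split; auto; lra. }
  destruct (completeness E HE HE2) as [l [Hub Hlub]].
  exists l. split; [|split].
  - intros P [eps HP].
    assert (Hy : exists a0 b0, A a0 /\ a0 <= b0 /\ l - eps < RInt f a0 b0).
    { apply Classical_Prop.NNPP. intros Hn.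
      assert (l <= l - eps).
      { apply Hlub. intros y [a [b [Ha [Hab ->]]]].
        apply Rnot_lt_le. intros Hlt. apply Hn. exists a, b. auto. }
      destruct eps as [e He]; simpl in *; lra. }
    destruct Hy as [a0 [b0 [Ha0 [Hab0 Hlt]]]].
    apply Filter_prod with (fun a => A a /\ a <= a0) (fun b => b0 < b).
    + now apply HF.
    + exists b0. auto.
    + intros a b [Ha Haa] Hb. simpl.
      exists (RInt f a b). split.
      * apply (RInt_correct f a b). apply Hex; auto; lra.
      * apply HP.
        assert (Hle : RInt f a b <= l).
        { apply Hub. exists a, b. repeat split; auto; lra. }
        assert (Hge : RInt f a0 b0 <= RInt f a b).
        { assert (Hab : ex_RInt f a b) by (apply Hex; auto; lra).
          assert (H1 : ex_RInt f a a0) by (apply (ex_RInt_Chasles_1 f _ _ b); [lra| auto]).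
          assert (H2 : ex_RInt f a0 b) by (apply (ex_RInt_Chasles_2 f a); [lra| auto]).
          assert (H3 : ex_RInt f a0 b0) by (apply (ex_RInt_Chasles_1 f _ _ b); [lra| auto]).
          assert (H4 : ex_RInt f b0 b) by (apply (ex_RInt_Chasles_2 f a0); [lra| auto]).
          rewrite <- (RInt_Chasles f a a0 b H1 H2).
          rewrite <- (RInt_Chasles f a0 b0 b H3 H4).
          assert (0 <= RInt f a a0).
          { apply RInt_ge_0; auto. intros x Hx. apply (Hpos a); auto; lra. }
          assert (0 <= RInt f b0 b).
          { apply RInt_ge_0; auto; try lra. intros x Hx. apply (Hpos a); auto; lra. }
          unfold plus; simpl. lra. }
        unfold ball; simpl; unfold AbsRing_ball, abs, minus, plus, opp; simpl.
        destruct eps as [e He]; simpl in *.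
        apply Rabs_def1; lra.
  - apply Hlub. intros y [a [b [Ha [Hab ->]]]]. now apply HM.
  - intros a b Ha Hab. apply Hub. exists a, b. auto.
Qed.
Lemma Rpower_derive (s x : R) : 0 < x -> is_derive (fun r => Rpower r s) x (s * Rpower x (s - 1)).
Proof. intros Hx. apply is_derive_Reals. now apply derivable_pt_lim_power. Qed.

Lemma Rpower_cont (s x : R) : 0 < x -> continuous (fun r => Rpower r s) x.
Proof. intros Hx. apply continuity_pt_filterlim. apply derivable_continuous_pt.
  exists (s * Rpower x (s - 1)). now apply derivable_pt_lim_power. Qed.

Lemma Rpower_pos (x y : R) : 0 < Rpower x y.
Proof. unfold Rpower. apply exp_pos. Qed.

Lemma is_RInt_pow (e u v : R) : e <> 0 -> 0 < u <= v ->
  is_RInt (fun r => Rpower r (e - 1)) u v ((Rpower v e - Rpower u e) / e).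
Proof.
  intros He Huv.
  assert (H := is_RInt_derive (fun r => Rpower r e / e) (fun r => Rpower r (e - 1)) u v).
  replace ((Rpower v e - Rpower u e) / e) with (minus (Rpower v e / e) (Rpower u e / e)).
  2:{ unfold minus, plus, opp; simpl. field. auto. }
  apply H.
  - intros x Hx. rewrite Rmin_left in Hx by lra. rewrite Rmax_right in Hx by lra.
    apply (is_derive_ext (fun r => / e * Rpower r e)).
    { intros t. unfold Rdiv. apply Rmult_comm. }
    apply is_derive_Reals.
    replace (Rpower x (e - 1)) with (/ e * (e * Rpower x (e - 1))) by (field; auto).
    apply (derivable_pt_lim_scal (fun r => Rpower r e)).
    apply derivable_pt_lim_power. lra.
  - intros x Hx. rewrite Rmin_left in Hx by lra. rewrite Rmax_right in Hx by lra.
    apply Rpower_cont. lra.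
Qed.

Lemma RInt_pow (e u v : R) : e <> 0 -> 0 < u <= v ->
  RInt (fun r => Rpower r (e - 1)) u v = (Rpower v e - Rpower u e) / e.
Proof. intros. apply is_RInt_unique. now apply is_RInt_pow. Qed.

Lemma ex_RInt_pow (e u v : R) : 0 < u <= v -> ex_RInt (fun r => Rpower r e) u v.
Proof.
  intros H. apply (ex_RInt_continuous (V:=R_CompleteNormedModule)). intros z Hz.
  rewrite Rmin_left in Hz by lra. rewrite Rmax_right in Hz by lra.
  apply Rpower_cont. lra.
Qed.

Lemma exp_le (x y : R) : x <= y -> exp x <= exp y.
Proof. intros H. destruct (Req_dec x y) as [->|Hn]; [lra|]. left. apply exp_increasing. lra. Qed.

Lemma nat_above (x : R) : 0 <= x -> exists n : nat, x < INR n.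
Proof.
  intros Hx. destruct (archimed x) as [H1 H2].
  exists (Z.to_nat (up x)). rewrite INR_IZR_INZ, Z2Nat.id.
  - lra.
  - apply le_IZR. lra.
Qed.

Lemma exp_neg_bound (y : R) (n : nat) : 0 < y -> exp (- y) <= INR (fact n) / y ^ n.
Proof.
  intros Hy.
  assert (Hf : 0 < INR (fact n)) by (apply lt_0_INR, lt_O_fact).
  assert (Hyn : 0 < y ^ n) by (apply pow_lt; lra).
  assert (H : y ^ n / INR (fact n) <= exp y).
  { eapply Rle_trans; [|apply (exp_ge_taylor y n); lra].
    destruct n as [|n]; [simpl; lra|].
    change (sum_f_R0 (fun k => y ^ k / INR (fact k)) (S n)) with
      (sum_f_R0 (fun k => y ^ k / INR (fact k)) n + y ^ (S n) / INR (fact (S n))).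
    assert (0 <= sum_f_R0 (fun k => y ^ k / INR (fact k)) n).
    { apply cond_pos_sum. intros k. apply Rdiv_le_0_compat.
      apply pow_le; lra. apply lt_0_INR, lt_O_fact. }
    lra. }
  rewrite exp_Ropp.
  replace (INR (fact n) / y ^ n) with (/ (y ^ n / INR (fact n))) by (field; lra).
  apply Rinv_le_contravar; auto.
  apply Rdiv_lt_0_compat; auto.
Qed.

Definition kern (s p beta r : R) : R := Rpower r (s - 1) * exp (- (beta * Rpower r p)).

Lemma kern_cont (s p beta r : R) : 0 < r -> continuous (kern s p beta) r.
Proof.
  intros Hr. unfold kern.
  apply continuity_pt_filterlim.
  apply continuity_pt_mult.
  - apply continuity_pt_filterlim. now apply Rpower_cont.
  - apply (continuity_pt_comp (fun r => - (beta * Rpower r p)) exp).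
    + apply continuity_pt_opp. apply continuity_pt_mult.
      apply continuity_pt_const. intros u v; reflexivity.
      apply continuity_pt_filterlim. now apply Rpower_cont.
    + apply derivable_continuous_pt. apply derivable_pt_exp.
Qed.

Lemma ex_RInt_pos (f : R -> R) (a b : R) : 0 < a <= b -> (forall r, 0 < r -> continuous f r) ->
  ex_RInt f a b.
Proof.
  intros H Hc. apply (ex_RInt_continuous (V:=R_CompleteNormedModule)). intros z Hz.
  rewrite Rmin_left in Hz by lra. rewrite Rmax_right in Hz by lra.
  apply Hc. lra.
Qed.

Lemma kern_nonneg (s p beta r : R) : 0 <= kern s p beta r.
Proof. unfold kern. apply Rmult_le_pos; [left; apply Rpower_pos| left; apply exp_pos]. Qed.

Lemma RInt_scal_R f a b k : ex_RInt f a b -> RInt (fun x => k * f x) a b = k * RInt f a b.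
Proof. intros H. exact (RInt_scal f a b k H). Qed.
Lemma ex_RInt_scal_R f a b k : ex_RInt f a b -> ex_RInt (fun x => k * f x) a b.
Proof. intros H. exact (ex_RInt_scal f a b k H). Qed.

Lemma RInt_sub_le (f : R -> R) (a' a b b' : R) : a' <= a -> a <= b -> b <= b' ->
  ex_RInt f a' b' -> (forall x, a' <= x <= b' -> 0 <= f x) -> RInt f a b <= RInt f a' b'.
Proof.
  intros H1 H2 H3 Hex Hpos.
  assert (E1 : ex_RInt f a' a) by (apply (ex_RInt_Chasles_1 f _ _ b'); [lra| auto]).
  assert (E2 : ex_RInt f a b') by (apply (ex_RInt_Chasles_2 f a'); [lra| auto]).
  assert (E3 : ex_RInt f a b) by (apply (ex_RInt_Chasles_1 f _ _ b'); [lra| auto]).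
  assert (E4 : ex_RInt f b b') by (apply (ex_RInt_Chasles_2 f a); [lra| auto]).
  rewrite <- (RInt_Chasles f a' a b' E1 E2).
  rewrite <- (RInt_Chasles f a b b' E3 E4).
  assert (0 <= RInt f a' a) by (apply RInt_ge_0; auto; intros x Hx; apply Hpos; lra).
  assert (0 <= RInt f b b') by (apply RInt_ge_0; auto; intros x Hx; apply Hpos; lra).
  unfold plus; simpl. lra.
Qed.

Lemma Rpower_pow_mult (r p : R) (n : nat) : 0 < r -> (Rpower r p) ^ n = Rpower r (p * INR n).
Proof. intros Hr. rewrite <- Rpower_pow by apply Rpower_pos. apply Rpower_mult. Qed.

Lemma kern_bound (s p : R) : 0 < s -> 0 < p -> exists C, 0 < C /\
  forall beta a b, 0 < beta -> 0 < a <= b ->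
  RInt (kern s p beta) a b <= C * Rpower beta (- (s / p)).
Proof.
  intros Hs Hp.
  destruct (nat_above (s / p)) as [n Hn].
  { apply Rlt_le, Rdiv_lt_0_compat; auto. }
  assert (Hsn : s < p * INR n).
  { apply (Rmult_lt_compat_l p) in Hn; auto. unfold Rdiv in Hn.
    rewrite <- Rmult_assoc, (Rmult_comm p s), Rmult_assoc, Rinv_r, Rmult_1_r in Hn; lra. }
  assert (Hf : 0 < INR (fact n)) by (apply lt_0_INR, lt_O_fact).
  exists (1 / s + INR (fact n) / (p * INR n - s)). split.
  { apply Rplus_lt_0_compat; apply Rdiv_lt_0_compat; lra. }
  intros beta a b Hb Hab.
  set (r0 := Rpower beta (- / p)).
  assert (Hr0 : 0 < r0) by apply Rpower_pos.
  set (a' := Rmin a r0). set (b' := Rmax b r0).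
  assert (Ha' : 0 < a' <= a /\ a' <= r0).
  { unfold a'. split; [split|]. apply Rmin_glb_lt; lra. apply Rmin_l. apply Rmin_r. }
  assert (Hb' : b <= b' /\ r0 <= b').
  { unfold b'. split. apply Rmax_l. apply Rmax_r. }
  assert (Hex : forall u v, 0 < u <= v -> ex_RInt (kern s p beta) u v).
  { intros u v Huv. apply ex_RInt_pos; auto. intros r Hr. now apply kern_cont. }
  set (e := s - p * INR n).
  set (F := INR (fact n) / beta ^ n).
  assert (HF : 0 < F) by (apply Rdiv_lt_0_compat; auto; apply pow_lt; auto).
  assert (S1 : RInt (kern s p beta) a b <= RInt (kern s p beta) a' b').
  { apply RInt_sub_le; try lra. apply Hex; lra. intros; apply kern_nonneg. }
  assert (S2 : RInt (kern s p beta) a' b' = RInt (kern s p beta) a' r0 + RInt (kern s p beta) r0 b').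
  { rewrite <- (RInt_Chasles (kern s p beta) a' r0 b'); auto. apply Hex; lra. apply Hex; lra. }
  assert (S3 : RInt (kern s p beta) a' r0 <= Rpower r0 s / s).
  { eapply Rle_trans.
    - apply (RInt_le _ (fun r => Rpower r (s - 1))). lra. apply Hex; lra.
      apply ex_RInt_pow; lra.
      intros x Hx. unfold kern. rewrite <- (Rmult_1_r (Rpower x (s - 1))) at 2.
      apply Rmult_le_compat_l. left; apply Rpower_pos.
      rewrite <- exp_0. apply exp_le.
      assert (0 < beta * Rpower x p) by (apply Rmult_lt_0_compat; auto; apply Rpower_pos). lra.
    - rewrite RInt_pow by lra.
      assert (0 < Rpower a' s) by apply Rpower_pos.
      unfold Rdiv. apply Rmult_le_compat_r. left; apply Rinv_0_lt_compat; auto. lra. }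
  assert (S4 : RInt (kern s p beta) r0 b' <= F * (Rpower r0 e / (p * INR n - s))).
  { eapply Rle_trans.
    - apply (RInt_le _ (fun r => F * (Rpower r (e - 1)))). lra. apply Hex; lra.
      apply ex_RInt_scal_R. apply ex_RInt_pow; lra.
      intros x Hx. unfold kern.
      assert (Hx0 : 0 < x) by lra.
      assert (Hy : 0 < beta * Rpower x p) by (apply Rmult_lt_0_compat; auto; apply Rpower_pos).
      eapply Rle_trans.
      { apply Rmult_le_compat_l. left; apply Rpower_pos. apply (exp_neg_bound _ n Hy). }
      rewrite Rpow_mult_distr, Rpower_pow_mult by auto.
      replace (e - 1) with ((s - 1) + - (p * INR n)) by (unfold e; ring).
      rewrite Rpower_plus, Rpower_Ropp. unfold F.
      assert (0 < beta ^ n) by (apply pow_lt; auto).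
      assert (0 < Rpower x (p * INR n)) by apply Rpower_pos.
      right. field. lra.
    - rewrite RInt_scal_R by (apply ex_RInt_pow; lra).
      rewrite RInt_pow by (unfold e; lra || lra).
      apply Rmult_le_compat_l. lra.
      assert (0 < Rpower b' e) by apply Rpower_pos.
      unfold e. unfold Rdiv.
      replace ((Rpower b' (s - p * INR n) - Rpower r0 (s - p * INR n)) * / (s - p * INR n))
        with ((Rpower r0 (s - p * INR n) - Rpower b' (s - p * INR n)) * / (p * INR n - s))
        by (field; lra).
      apply Rmult_le_compat_r. left; apply Rinv_0_lt_compat; lra. generalize (Rpower_pos b' (s - p * INR n)); lra. }
  assert (E1 : Rpower r0 s = Rpower beta (- (s / p))).
  { unfold r0. rewrite Rpower_mult. f_equal. field. lra. }
  assert (E2 : F * Rpower r0 e = INR (fact n) * Rpower beta (- (s / p))).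
  { unfold r0, F, e. rewrite Rpower_mult.
    replace (- / p * (s - p * INR n)) with (- (s / p) + INR n) by (field; lra).
    rewrite Rpower_plus, Rpower_pow by auto. field. apply pow_nonzero. lra. }
  rewrite S2 in S1.
  assert (Hd : 0 < p * INR n - s) by lra.
  replace (F * (Rpower r0 e / (p * INR n - s))) with (F * Rpower r0 e / (p * INR n - s)) in S4 by (field; lra).
  rewrite E2 in S4. rewrite E1 in S3.
  replace ((1 / s + INR (fact n) / (p * INR n - s)) * Rpower beta (- (s / p)))
    with (Rpower beta (- (s / p)) / s + INR (fact n) * Rpower beta (- (s / p)) / (p * INR n - s))
    by (field; lra).
  clear -S1 S3 S4. lra.
Qed.

Lemma cont_ext_pos (f g : R -> R) (x : R) : (forall r, 0 < r -> f r = g r) -> 0 < x ->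
  continuous g x -> continuous f x.
Proof.
  intros Hfg Hx Hc. apply (continuous_ext_loc _ g); auto.
  exists (mkposreal x Hx). intros y Hy. simpl in Hy.
  unfold ball in Hy; simpl in Hy; unfold AbsRing_ball, abs, minus, plus, opp in Hy; simpl in Hy.
  apply Rabs_def2 in Hy. symmetry. apply Hfg. lra.
Qed.

Lemma at_right0_le (a0 : R) : 0 < a0 -> at_right 0 (fun a => 0 < a /\ a <= a0).
Proof.
  intros H. exists (mkposreal a0 H). intros y Hy Hy0. simpl in Hy.
  unfold ball in Hy; simpl in Hy; unfold AbsRing_ball, abs, minus, plus, opp in Hy; simpl in Hy.
  apply Rabs_def2 in Hy. split; lra.
Qed.

Lemma Rpower_base1 (y : R) : Rpower 1 y = 1.
Proof. unfold Rpower. rewrite ln_1, Rmult_0_r. apply exp_0. Qed.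

Lemma Gamma_pos (x : R) : 0 < x -> 0 < Gamma x.
Proof.
  intros Hx.
  set (f := fun t => Rpower t (x - 1) * exp (- t)).
  assert (Hfk : forall t, 0 < t -> f t = kern x 1 1 t).
  { intros t Ht. unfold f, kern. rewrite Rpower_1 by auto. f_equal. f_equal. f_equal. ring. }
  assert (Hc : forall t, 0 < t -> continuous f t).
  { intros t Ht. apply (cont_ext_pos _ (kern x 1 1)); auto. intros; now apply kern_cont. }
  destruct (kern_bound x 1 Hx Rlt_0_1) as [C [HC Hb]].
  destruct (improper_sup f (fun a => 0 < a) (at_right 0) C) as [l [Hl [HlM Hlow]]].
  - apply at_right0_le.
  - exists 1. lra.
  - intros a t Ha Hat. rewrite Hfk by lra. apply kern_nonneg.
  - intros a b Ha Hab. apply ex_RInt_pos; auto.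
  - intros a b Ha Hab.
    rewrite (RInt_ext f (kern x 1 1)).
    + eapply Rle_trans. apply Hb; auto; lra. rewrite Rpower_base1. lra.
    + intros t Ht. rewrite Rmin_left in Ht by lra. apply Hfk. lra.
  - unfold Gamma. fold f. rewrite (is_RInt_gen_unique f l Hl).
    eapply Rlt_le_trans; [|apply (Hlow 1 2); lra].
    apply RInt_gt_0. lra.
    + intros t Ht. unfold f. apply Rmult_lt_0_compat. apply Rpower_pos. apply exp_pos.
    + intros t Ht. apply Hc. lra.
Qed.

Definition gq (t : R) : R := exp (- (t ^ 2) / 2).

Lemma gq_cont (t : R) : continuous gq t.
Proof.
  apply continuity_pt_filterlim. apply derivable_continuous_pt.
  eexists. apply is_derive_Reals. unfold gq. auto_derive. auto. reflexivity.
Qed.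

Lemma ex_RInt_gq (a b : R) : ex_RInt gq a b.
Proof. apply (ex_RInt_continuous (V:=R_CompleteNormedModule)). intros; apply gq_cont. Qed.

Lemma Q_int (x : R) : 0 <= x -> exists l, is_RInt_gen gq (at_point x) (Rbar_locally p_infty) l
  /\ l <= exp (/ 2 - x ^ 2 / 2) /\ (forall b, x <= b -> RInt gq x b <= l).
Proof.
  intros Hx.
  destruct (improper_sup gq (fun a => a = x) (at_point x) (exp (/ 2 - x ^ 2 / 2)))
    as [l [Hl [HlM Hlow]]].
  - intros a0 ->. unfold at_point. split; lra.
  - exists x; auto.
  - intros a t _ _. left. apply exp_pos.
  - intros a b _ _. apply ex_RInt_gq.
  - intros a b -> Hab. set (c := / 2 - x ^ 2 / 2).
    assert (HD : is_RInt (fun t => exp (c - (t - x))) x b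
                   (minus (- exp (c - (b - x))) (- exp (c - (x - x))))).
    { apply (is_RInt_derive (fun t => - exp (c - (t - x)))).
      - intros t _. auto_derive. auto. replace (c + - (t + - x)) with (c - (t - x)) by ring. ring.
      - intros t _. apply continuity_pt_filterlim. apply derivable_continuous_pt.
        eexists. apply is_derive_Reals. auto_derive. auto. reflexivity. }
    eapply Rle_trans.
    + apply (RInt_le gq (fun t => exp (c - (t - x))) x b Hab (ex_RInt_gq x b) (ex_intro _ _ HD)).
      intros t Ht. unfold gq. apply exp_le. unfold c.
      assert (H1: 0 <= (t - x) * x) by (apply Rmult_le_pos; lra).
      assert (H2 : 0 <= (t - x - 1) * (t - x - 1)) by apply Rle_0_sqr. nra.
    + rewrite (is_RInt_unique _ _ _ _ HD). unfold minus, plus, opp; simpl.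
      replace (c - (x - x)) with c by ring.
      generalize (exp_pos (c - (b - x))). lra.
  - exists l. split; [exact Hl| split; [exact HlM| intros b Hb; apply Hlow; auto]].
Qed.

Lemma Qfun_eq (x : R) : 0 <= x -> forall l, is_RInt_gen gq (at_point x) (Rbar_locally p_infty) l ->
  Qfun x = / sqrt (2 * PI) * l.
Proof.
  intros Hx l Hl. unfold Qfun. f_equal.
  rewrite <- (is_RInt_gen_unique gq l Hl). reflexivity.
Qed.

Lemma Qfun_chasles (x y : R) : 0 <= x -> 0 <= y ->
  Qfun x = / sqrt (2 * PI) * RInt gq x y + Qfun y.
Proof.
  intros Hx Hy.
  destruct (Q_int y Hy) as [ly [Hly _]].
  assert (H1 : is_RInt_gen gq (at_point x) (at_point y) (RInt gq x y)).
  { apply is_RInt_gen_at_point. apply (RInt_correct gq). apply ex_RInt_gq. }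
  assert (H2 := is_RInt_gen_Chasles gq y _ _ H1 Hly).
  rewrite (Qfun_eq x Hx _ H2), (Qfun_eq y Hy _ Hly).
  unfold plus; simpl. ring.
Qed.

Lemma Qfun_bounds (x : R) : 0 <= x ->
  0 < Qfun x /\ Qfun x <= / sqrt (2 * PI) * exp (/ 2 - x ^ 2 / 2).
Proof.
  intros Hx. destruct (Q_int x Hx) as [l [Hl [HlM Hlow]]].
  rewrite (Qfun_eq x Hx l Hl).
  assert (Hs : 0 < / sqrt (2 * PI)).
  { apply Rinv_0_lt_compat, sqrt_lt_R0. generalize PI_RGT_0. lra. }
  split.
  - apply Rmult_lt_0_compat; auto.
    eapply Rlt_le_trans; [|apply (Hlow (x + 1)); lra].
    apply RInt_gt_0. lra. intros; apply exp_pos. intros; apply gq_cont.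
  - apply Rmult_le_compat_l; lra.
Qed.

Lemma Qfun_mono (x y : R) : 0 <= x <= y -> Qfun y <= Qfun x.
Proof.
  intros Hxy. rewrite (Qfun_chasles x y) by lra.
  assert (0 <= RInt gq x y).
  { apply RInt_ge_0. lra. apply ex_RInt_gq. intros; left; apply exp_pos. }
  assert (Hs : 0 < / sqrt (2 * PI)).
  { apply Rinv_0_lt_compat, sqrt_lt_R0. generalize PI_RGT_0. lra. }
  generalize (Rmult_le_pos _ _ (Rlt_le _ _ Hs) H). lra.
Qed.

Lemma Qfun_cont (x : R) : 0 < x -> continuous Qfun x.
Proof.
  intros Hx.
  apply (cont_ext_pos _ (fun z => Qfun 0 - / sqrt (2 * PI) * RInt gq 0 z)); auto.
  { intros r Hr. rewrite (Qfun_chasles 0 r) by lra. ring. }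
  apply continuity_pt_filterlim.
  apply continuity_pt_minus. apply continuity_pt_const. intros u v; reflexivity.
  apply continuity_pt_mult. apply continuity_pt_const. intros u v; reflexivity.
  apply continuity_pt_filterlim.
  apply (ex_derive_continuous (K:=R_AbsRing) (V:=R_NormedModule)).
  exists (gq x). apply (is_derive_RInt gq (RInt gq 0) 0 x).
  - apply filter_forall. intros b. apply (RInt_correct gq). apply ex_RInt_gq.
  - apply gq_cont.
Qed.

Lemma poch_pos (a : R) (n : nat) : 0 < a -> 0 < poch a n.
Proof.
  intros Ha. induction n as [|n IH]; simpl. lra.
  apply Rmult_lt_0_compat; auto. generalize (pos_INR n); lra.
Qed.

Lemma poch_ratio_bound (a b B : R) : 0 < a -> 0 < b -> 1 < B ->
  exists A, 0 < A /\ forall n, poch a n / poch b n <= A * B ^ n.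
Proof.
  intros Ha Hb HB.
  destruct (nat_above (a / (B - 1))) as [N HN].
  { apply Rlt_le, Rdiv_lt_0_compat; lra. }
  assert (HN' : a < (B - 1) * INR N).
  { apply (Rmult_lt_compat_l (B - 1)) in HN; [|lra].
    unfold Rdiv in HN. rewrite <- Rmult_assoc, (Rmult_comm (B - 1) a), Rmult_assoc, Rinv_r, Rmult_1_r in HN; lra. }
  set (M := 1 + (a + INR N) / b).
  assert (HM : 1 <= M).
  { unfold M. assert (0 <= (a + INR N) / b). apply Rdiv_le_0_compat; generalize (pos_INR N); lra. lra. }
  assert (L1 : forall n, (n <= N)%nat -> poch a n <= M ^ n * poch b n).
  { induction n as [|n IH]; intros Hn; simpl. lra.
    assert (Hn' : (n <= N)%nat) by lia.
    assert (Hlt : INR n < INR N) by (apply lt_INR; lia).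
    assert (Hstep : a + INR n <= M * (b + INR n)).
    { unfold M. assert (H0 : 0 <= INR n) by apply pos_INR.
      assert (H1 : (a + INR N) / b * b = a + INR N) by (field; lra).
      assert (H2 : 0 <= (a + INR N) / b) by (apply Rdiv_le_0_compat; lra).
      nra. }
    specialize (IH Hn').
    assert (0 < poch b n) by (apply poch_pos; auto).
    assert (0 <= a + INR n) by (generalize (pos_INR n); lra).
    assert (0 <= M ^ n) by (apply pow_le; lra).
    replace (M * M ^ n * (poch b n * (b + INR n))) with ((M ^ n * poch b n) * (M * (b + INR n))) by ring.
    apply Rmult_le_compat; auto. left; apply poch_pos; auto. }
  assert (L2 : forall m, poch a (N + m) <= M ^ N * B ^ m * poch b (N + m)).
  { induction m as [|m IH].
    - rewrite Nat.add_0_r. simpl. rewrite Rmult_1_r. apply L1. lia.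
    - rewrite Nat.add_succ_r. simpl.
      assert (Hk : INR N <= INR (N + m)) by (apply le_INR; lia).
      assert (Hstep : a + INR (N + m) <= B * (b + INR (N + m))) by nra.
      assert (0 <= a + INR (N + m)) by (generalize (pos_INR (N + m)); lra).
      assert (0 <= M ^ N * B ^ m) by (apply Rmult_le_pos; apply pow_le; lra).
      replace (M ^ N * (B * B ^ m) * (poch b (N + m) * (b + INR (N + m))))
        with ((M ^ N * B ^ m * poch b (N + m)) * (B * (b + INR (N + m)))) by ring.
      apply Rmult_le_compat; auto. left; apply poch_pos; auto. }
  exists (M ^ N). split. apply pow_lt; lra.
  intros n. assert (Hpb : 0 < poch b n) by (apply poch_pos; auto).
  apply (Rmult_le_reg_r (poch b n)); auto.
  unfold Rdiv. rewrite Rmult_assoc, Rinv_l, Rmult_1_r by lra.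
  destruct (Nat.le_gt_cases n N) as [Hn|Hn].
  - eapply Rle_trans. apply L1; auto.
    apply Rmult_le_compat_r. lra.
    rewrite <- (Rmult_1_r (M ^ n)). apply Rmult_le_compat.
    apply pow_le; lra. lra. apply Rle_pow; auto. apply pow_R1_Rle; lra.
  - replace n with (N + (n - N))%nat by lia.
    eapply Rle_trans. apply L2.
    apply Rmult_le_compat_r. left; apply poch_pos; auto.
    apply Rmult_le_compat_l. apply pow_le; lra.
    apply Rle_pow. lra. lia.
Qed.

Definition hterm (a b z : R) (n : nat) : R := poch a n / poch b n * z ^ n / INR (fact n).

Lemma exp_series (x : R) : is_series (fun n => x ^ n / INR (fact n)) (exp x).
Proof.
  apply (is_series_ext (fun k => scal (pow_n x k) (/ INR (fact k)))).
  - intros n. rewrite pow_n_pow. reflexivity.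
  - apply is_exp_Reals.
Qed.

Lemma hyp1F1_bounds (a b B : R) : 0 < a -> 0 < b -> 1 < B ->
  exists A, 0 < A /\ forall z, 0 <= z -> 1 <= hyp1F1 a b z <= A * exp (B * z).
Proof.
  intros Ha Hb HB.
  destruct (poch_ratio_bound a b B Ha Hb HB) as [A [HA HAb]].
  exists A. split; auto. intros z Hz.
  assert (Hfac : forall n, 0 < INR (fact n)) by (intros; apply lt_0_INR, lt_O_fact).
  assert (Hnn : forall n, 0 <= hterm a b z n).
  { intros n. unfold hterm. apply Rdiv_le_0_compat; auto.
    apply Rmult_le_pos. apply Rdiv_le_0_compat; [left; apply poch_pos; auto| apply poch_pos; auto].
    apply pow_le; auto. }
  assert (Hle : forall n, hterm a b z n <= (B * z) ^ n / INR (fact n) * A).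
  { intros n. unfold hterm. rewrite Rpow_mult_distr.
    replace (B ^ n * z ^ n / INR (fact n) * A) with ((A * B ^ n) * (z ^ n / INR (fact n))) by (unfold Rdiv; ring).
    replace (poch a n / poch b n * z ^ n / INR (fact n)) with ((poch a n / poch b n) * (z ^ n / INR (fact n))) by (unfold Rdiv; ring).
    apply Rmult_le_compat_r.
    apply Rdiv_le_0_compat; auto. apply pow_le; auto.
    apply HAb. }
  assert (HS : is_series (fun n => (B * z) ^ n / INR (fact n) * A) (exp (B * z) * A)).
  { apply is_series_scal_r. apply exp_series. }
  assert (Hex : ex_series (hterm a b z)).
  { apply (ex_series_le (K:=R_AbsRing) (V:=R_CompleteNormedModule) _ (fun n => (B * z) ^ n / INR (fact n) * A)).
    - intros n. unfold norm; simpl. unfold abs; simpl. rewrite Rabs_pos_eq; auto.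
    - eexists; exact HS. }
  assert (Hdef : hyp1F1 a b z = Series (hterm a b z)) by reflexivity.
  split.
  - rewrite Hdef, Series_incr_1 by auto.
    assert (H0 : hterm a b z 0 = 1).
    { unfold hterm. simpl. field. }
    rewrite H0.
    assert (0 <= Series (fun k => hterm a b z (S k))).
    { replace 0 with (Series (fun _ => 0)).
      - apply Series_le. intros n; split; [lra| apply Hnn].
        apply (ex_series_incr_1 (hterm a b z)). auto.
      - assert (Hz0 := PSeries_const_0 0). unfold PSeries in Hz0. transitivity (Series (fun k => 0 * 0 ^ k)); [|exact Hz0].
        apply Series_ext. intros; ring. }
    lra.
  - rewrite Hdef, Rmult_comm, <- (is_series_unique _ _ HS).
    apply Series_le.
    + intros n; split; auto.
    + eexists; exact HS.
Qed.

Definition hcoef (a b : R) (n : nat) : R := poch a n / poch b n / INR (fact n).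

Lemma lim_inv_n1 : is_lim_seq (fun n => / (INR n + 1)) 0.
Proof.
  assert (H : is_lim_seq (fun n => INR n + 1) p_infty).
  { apply (is_lim_seq_ext (fun n => INR (S n))). intros; apply S_INR.
    apply (is_lim_seq_incr_1 INR). apply is_lim_seq_INR. }
  apply (is_lim_seq_inv _ _ H). discriminate.
Qed.

Lemma hyp1F1_cont (a b z : R) : 0 < a -> 0 < b -> continuity_pt (hyp1F1 a b) z.
Proof.
  intros Ha Hb.
  assert (Hfac : forall n, 0 < INR (fact n)) by (intros; apply lt_0_INR, lt_O_fact).
  assert (Hc : forall n, 0 < hcoef a b n).
  { intros n. unfold hcoef. apply Rdiv_lt_0_compat; auto.
    apply Rdiv_lt_0_compat; apply poch_pos; auto. }
  assert (HR : CV_radius (hcoef a b) = p_infty).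
  { apply CV_radius_infinite_DAlembert.
    - intros n. specialize (Hc n). lra.
    - set (K := 1 + a / b).
      apply (is_lim_seq_le_le (fun _ => 0) _ (fun n => K * / (INR n + 1))).
      + intros n.
        assert (Hn : 0 <= INR n) by apply pos_INR.
        assert (E : hcoef a b (S n) / hcoef a b n = (a + INR n) / ((b + INR n) * (INR n + 1))).
        { unfold hcoef. simpl poch. rewrite fact_simpl, mult_INR, S_INR.
          assert (0 < poch a n) by (apply poch_pos; auto).
          assert (0 < poch b n) by (apply poch_pos; auto).
          specialize (Hfac n). field. repeat split; lra. }
        rewrite E. rewrite Rabs_pos_eq.
        * split. apply Rdiv_le_0_compat. lra. apply Rmult_lt_0_compat; lra.
          unfold K. unfold Rdiv.
          rewrite Rinv_mult.
          replace ((1 + a * / b) * / (INR n + 1)) with (((b + a) / b) * / (INR n + 1)) by (field; lra).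
          rewrite <- Rmult_assoc. apply Rmult_le_compat_r.
          left; apply Rinv_0_lt_compat; lra.
          apply (Rmult_le_reg_r (b + INR n)). lra.
          rewrite Rmult_assoc, Rinv_l, Rmult_1_r by lra.
          assert (0 <= a * INR n / b) by (apply Rdiv_le_0_compat; nra).
          replace ((b + a) / b * (b + INR n)) with (b + a + INR n + a * INR n / b) by (field; lra).
          lra.
        * apply Rdiv_le_0_compat. lra. apply Rmult_lt_0_compat; lra.
      + apply is_lim_seq_const.
      + replace (Finite 0) with (Rbar_mult K 0) by (simpl; f_equal; ring).
        apply is_lim_seq_scal_l. apply lim_inv_n1. }
  apply (continuity_pt_ext (PSeries (hcoef a b))).
  - intros x. unfold PSeries, hyp1F1. apply Series_ext. intros n. unfold hcoef. field.
    split. generalize (poch_pos b n Hb); lra. specialize (Hfac n); lra.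
  - apply PSeries_continuity. rewrite HR. simpl. trivial.
Qed.

Definition Kpdf (mX mY OX OY : R) : R :=
  2 / Gamma mX * Rpower (mY * OX / (mY * OX + mX * OY)) mY * Rpower (mX / OX) mX.

Lemma pdf_eq (mX mY OX OY r : R) : bx_pdf mX mY OX OY r =
  Kpdf mX mY OX OY * Rpower r (2 * mX - 1)
  * hyp1F1 mY mX (mX ^ 2 * OY * r ^ 2 / (OX * (mY * OX + mX * OY)))
  * exp (- (mX / OX) * r ^ 2).
Proof. unfold bx_pdf, Kpdf. unfold Rdiv. ring. Qed.

Lemma Kpdf_pos (mX mY OX OY : R) : 0 < mX -> 0 < Kpdf mX mY OX OY.
Proof.
  intros H. unfold Kpdf. repeat apply Rmult_lt_0_compat; try apply Rpower_pos.
  lra. apply Rinv_0_lt_compat. now apply Gamma_pos.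
Qed.

Lemma pdf_bounds (mX mY OX OY : R) : 0 < mX -> 0 < mY -> 0 < OX -> 0 < OY ->
  exists K1 K2, 0 < K1 /\ 0 < K2 /\ forall r, 0 < r ->
   K1 * Rpower r (2 * mX - 1) * exp (- (mX / OX) * r ^ 2) <= bx_pdf mX mY OX OY r
   /\ bx_pdf mX mY OX OY r <= K2 * Rpower r (2 * mX - 1).
Proof.
  intros HX HY HOX HOY.
  set (B := (mY * OX + mX * OY) / (mX * OY)).
  assert (HB : 1 < B).
  { unfold B. apply (Rmult_lt_reg_r (mX * OY)). nra.
    unfold Rdiv. rewrite Rmult_assoc, Rinv_l, Rmult_1_r by nra. nra. }
  destruct (hyp1F1_bounds mY mX B HY HX HB) as [A [HA HAb]].
  set (K := Kpdf mX mY OX OY).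
  assert (HK : 0 < K) by (apply Kpdf_pos; auto).
  exists K, (K * A). split; auto. split. nra.
  intros r Hr. rewrite pdf_eq. fold K.
  set (z := mX ^ 2 * OY * r ^ 2 / (OX * (mY * OX + mX * OY))).
  assert (Hz : 0 <= z).
  { unfold z. apply Rdiv_le_0_compat; [apply Rmult_le_pos; [apply Rmult_le_pos; [apply pow_le; lra| lra] | apply pow_le; lra] | apply Rmult_lt_0_compat; nra]. }
  destruct (HAb z Hz) as [H1 H2].
  assert (HP : 0 < Rpower r (2 * mX - 1)) by apply Rpower_pos.
  assert (HE : 0 < exp (- (mX / OX) * r ^ 2)) by apply exp_pos.
  split.
  - rewrite <- (Rmult_1_r (K * Rpower r (2 * mX - 1))) at 1.
    apply Rmult_le_compat_r. lra. apply Rmult_le_compat_l. nra. lra.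
  - assert (HBz : B * z = mX / OX * r ^ 2).
    { unfold B, z. field. repeat split; nra. }
    assert (Hprod : hyp1F1 mY mX z * exp (- (mX / OX) * r ^ 2) <= A).
    { eapply Rle_trans. apply Rmult_le_compat_r. lra. exact H2.
      rewrite Rmult_assoc, <- exp_plus, HBz.
      replace (mX / OX * r ^ 2 + - (mX / OX) * r ^ 2) with 0 by ring.
      rewrite exp_0. lra. }
    replace (K * Rpower r (2 * mX - 1) * hyp1F1 mY mX z * exp (- (mX / OX) * r ^ 2))
      with ((K * Rpower r (2 * mX - 1)) * (hyp1F1 mY mX z * exp (- (mX / OX) * r ^ 2))) by ring.
    replace (K * A * Rpower r (2 * mX - 1)) with ((K * Rpower r (2 * mX - 1)) * A) by ring.
    apply Rmult_le_compat_l. nra. auto.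
Qed.

Lemma pdf_cont (mX mY OX OY r : R) : 0 < mX -> 0 < mY -> 0 < r ->
  continuity_pt (bx_pdf mX mY OX OY) r.
Proof.
  intros HX HY Hr.
  apply (continuity_pt_ext (fun r => Kpdf mX mY OX OY * Rpower r (2 * mX - 1)
     * hyp1F1 mY mX (mX ^ 2 * OY * r ^ 2 / (OX * (mY * OX + mX * OY)))
     * exp (- (mX / OX) * r ^ 2))).
  { intros x. symmetry. apply pdf_eq. }
  set (K := Kpdf mX mY OX OY). clearbody K.
  set (h := fun r => hyp1F1 mY mX (mX ^ 2 * OY * r ^ 2 / (OX * (mY * OX + mX * OY)))).
  assert (Hh : continuity_pt h r).
  { apply (continuity_pt_comp (fun r => mX ^ 2 * OY * r ^ 2 / (OX * (mY * OX + mX * OY))) (hyp1F1 mY mX)).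
    + apply derivable_continuous_pt. eexists. apply is_derive_Reals. auto_derive. auto. reflexivity.
    + now apply hyp1F1_cont. }
  assert (HP : continuity_pt (fun r => Rpower r (2 * mX - 1)) r).
  { apply continuity_pt_filterlim. now apply Rpower_cont. }
  assert (HE : continuity_pt (fun r => exp (- (mX / OX) * r ^ 2)) r).
  { apply derivable_continuous_pt. eexists. apply is_derive_Reals. auto_derive. auto. reflexivity. }
  assert (HK : continuity_pt (fun _ => K) r).
  { apply continuity_pt_const. intros u v; reflexivity. }
  change (continuity_pt (fun r => (K * Rpower r (2 * mX - 1) * h r) * exp (- (mX / OX) * r ^ 2)) r).
  apply (continuity_pt_mult (fun r => K * Rpower r (2 * mX - 1) * h r)); auto.
  apply (continuity_pt_mult (fun r => K * Rpower r (2 * mX - 1)) h); auto.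
  apply (continuity_pt_mult (fun _ => K) (fun r => Rpower r (2 * mX - 1))); auto.
Qed.

Definition c0 (mX mY OX OY alpha : R) : R :=
  Rpower (C_alpha mX mY OX OY alpha * mX / OX) (2 / alpha).

Lemma snr_eq (mX mY OX OY alpha gbar r : R) : 0 < mX -> 0 < OX -> 0 < r ->
  snr mX mY OX OY alpha gbar r = gbar * c0 mX mY OX OY alpha * Rpower r (4 / alpha).
Proof.
  intros HX HO Hr. unfold snr, c0.
  assert (HC : 0 < C_alpha mX mY OX OY alpha) by (unfold C_alpha; apply Rpower_pos).
  replace (C_alpha mX mY OX OY alpha * mX * r ^ 2 / OX)
    with ((C_alpha mX mY OX OY alpha * mX / OX) * Rpower r 2).
  2:{ rewrite <- (Rpower_pow 2 r Hr). replace (INR 2) with 2 by (simpl; ring). field. lra. }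
  rewrite <- Rpower_mult_distr.
  - rewrite Rpower_mult. replace (2 * (2 / alpha)) with (4 / alpha) by (unfold Rdiv; ring). ring.
  - apply Rdiv_lt_0_compat; [apply Rmult_lt_0_compat|]; lra.
  - apply Rpower_pos.
Qed.

Lemma c0_pos (mX mY OX OY alpha : R) : 0 < c0 mX mY OX OY alpha.
Proof. apply Rpower_pos. Qed.

Definition hint (mX mY OX OY alpha gbar d r : R) : R :=
  Qfun (sqrt (2 * d * snr mX mY OX OY alpha gbar r)) * bx_pdf mX mY OX OY r.

Lemma snr_pos (mX mY OX OY alpha gbar r : R) : 0 < mX -> 0 < OX -> 0 < r -> 0 < gbar ->
  0 < snr mX mY OX OY alpha gbar r.
Proof.
  intros. rewrite snr_eq by auto. repeat apply Rmult_lt_0_compat; auto; apply Rpower_pos.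
Qed.

Lemma hint_cont (mX mY OX OY alpha gbar d r : R) : 0 < mX -> 0 < mY -> 0 < OX -> 0 < alpha ->
  0 < gbar -> 0 < d -> 0 < r -> continuous (hint mX mY OX OY alpha gbar d) r.
Proof.
  intros HX HY HO Ha Hg Hd Hr.
  apply continuity_pt_filterlim. unfold hint.
  apply (continuity_pt_mult (fun r => Qfun (sqrt (2 * d * snr mX mY OX OY alpha gbar r)))).
  2: now apply pdf_cont.
  assert (Hs : continuity_pt (fun r => 2 * d * snr mX mY OX OY alpha gbar r) r).
  { apply (continuity_pt_ext (fun r => 2 * d * (gbar * Rpower (C_alpha mX mY OX OY alpha * mX * r ^ 2 / OX) (2 / alpha)))).
    { intros; reflexivity. }
    apply (continuity_pt_mult (fun _ => 2 * d)). apply continuity_pt_const. intros u v; reflexivity.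
    apply (continuity_pt_mult (fun _ => gbar)). apply continuity_pt_const. intros u v; reflexivity.
    apply (continuity_pt_comp (fun r => C_alpha mX mY OX OY alpha * mX * r ^ 2 / OX) (fun u => Rpower u (2 / alpha))).
    - apply derivable_continuous_pt. eexists. apply is_derive_Reals. auto_derive. auto. reflexivity.
    - apply continuity_pt_filterlim. apply Rpower_cont.
      assert (HC : 0 < C_alpha mX mY OX OY alpha) by (unfold C_alpha; apply Rpower_pos).
      apply Rdiv_lt_0_compat; auto. apply Rmult_lt_0_compat. nra. apply pow_lt; auto. }
  assert (Hpos : 0 < 2 * d * snr mX mY OX OY alpha gbar r).
  { apply Rmult_lt_0_compat. lra. now apply snr_pos. }
  apply (continuity_pt_comp (fun r => sqrt (2 * d * snr mX mY OX OY alpha gbar r)) Qfun).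
  - apply (continuity_pt_comp (fun r => 2 * d * snr mX mY OX OY alpha gbar r) sqrt); auto.
    apply continuity_pt_sqrt. lra.
  - apply continuity_pt_filterlim. apply Qfun_cont. apply sqrt_lt_R0. auto.
Qed.

Lemma Rpower_half_lt1 (y : R) : 0 < y -> Rpower (/ 2) y < 1.
Proof.
  intros Hy. unfold Rpower. rewrite <- exp_0. apply exp_increasing.
  assert (ln (/ 2) < 0).
  { rewrite <- ln_1. apply ln_increasing; lra. }
  nra.
Qed.

Lemma EQ_bounds (mX mY OX OY alpha d : R) : 0 < mX -> 0 < mY -> 0 < OX -> 0 < OY ->
  0 < alpha -> 0 < d ->
  exists cl cu, 0 < cl /\ 0 < cu /\ forall gbar, 1 <= gbar ->
   cl * Rpower gbar (- (alpha / 2 * mX)) <= EQ mX mY OX OY alpha gbar d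
   /\ EQ mX mY OX OY alpha gbar d <= cu * Rpower gbar (- (alpha / 2 * mX)).
Proof.
  intros HX HY HOX HOY Ha Hd.
  set (k := alpha / 2 * mX).
  set (c := c0 mX mY OX OY alpha).
  assert (Hc : 0 < c) by apply c0_pos.
  destruct (pdf_bounds mX mY OX OY HX HY HOX HOY) as [K1 [K2 [HK1 [HK2 Hpdf]]]].
  destruct (kern_bound (2 * mX) (4 / alpha)) as [C [HC Hkb]].
  { lra. }
  { apply Rdiv_lt_0_compat; lra. }
  set (Kq := / sqrt (2 * PI) * exp (/ 2)).
  assert (Hs2pi : 0 < / sqrt (2 * PI)).
  { apply Rinv_0_lt_compat, sqrt_lt_R0. generalize PI_RGT_0. lra. }
  assert (HKq : 0 < Kq) by (unfold Kq; apply Rmult_lt_0_compat; auto; apply exp_pos).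
  set (q0 := Qfun (sqrt (2 * d * c))).
  assert (Hq0 : 0 < q0).
  { apply Qfun_bounds. apply sqrt_pos. }
  set (cu := Kq * K2 * C * Rpower (d * c) (- k)).
  set (cl := q0 * K1 * exp (- (mX / OX)) * (1 - Rpower (/ 2) (2 * mX)) / (2 * mX)).
  assert (Hh : 0 < Rpower (/ 2) (2 * mX) < 1).
  { split. apply Rpower_pos. apply Rpower_half_lt1. lra. }
  exists cl, cu. split; [|split].
  { unfold cl. apply Rdiv_lt_0_compat; [|lra].
    apply Rmult_lt_0_compat; [apply Rmult_lt_0_compat; [apply Rmult_lt_0_compat; auto| apply exp_pos]| lra]. }
  { unfold cu. apply Rmult_lt_0_compat; [apply Rmult_lt_0_compat; [apply Rmult_lt_0_compat; auto|auto]| apply Rpower_pos]. }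
  intros gbar Hg.
  set (h := hint mX mY OX OY alpha gbar d).
  assert (Hsnr : forall r, 0 < r -> snr mX mY OX OY alpha gbar r = gbar * c * Rpower r (4 / alpha)).
  { intros r Hr. apply snr_eq; auto. }
  assert (Hhpos : forall r, 0 < r -> 0 <= h r).
  { intros r Hr. unfold h, hint. apply Rmult_le_pos.
    - left. apply Qfun_bounds. apply sqrt_pos.
    - destruct (Hpdf r Hr) as [H1 _]. eapply Rle_trans; [|exact H1].
      repeat apply Rmult_le_pos; try lra; left; try apply Rpower_pos; apply exp_pos. }
  assert (Hhup : forall r, 0 < r -> h r <= (Kq * K2) * kern (2 * mX) (4 / alpha) (d * gbar * c) r).
  { intros r Hr. unfold h, hint.
    assert (Hsp : 0 < snr mX mY OX OY alpha gbar r) by (apply snr_pos; auto; lra).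
    set (x := sqrt (2 * d * snr mX mY OX OY alpha gbar r)).
    assert (Hx2 : x ^ 2 = 2 * d * snr mX mY OX OY alpha gbar r).
    { apply pow2_sqrt. apply Rmult_le_pos; lra. }
    destruct (Qfun_bounds x (sqrt_pos _)) as [Qp Qu].
    assert (HQ : Qfun x <= Kq * exp (- (d * gbar * c * Rpower r (4 / alpha)))).
    { eapply Rle_trans; [exact Qu|]. rewrite Hx2, (Hsnr r Hr). unfold Kq.
      rewrite (Rmult_assoc (/ sqrt (2 * PI)) (exp (/ 2))), <- exp_plus. right. f_equal. f_equal. field. }
    destruct (Hpdf r Hr) as [Pl Pu].
    assert (Ppos : 0 <= bx_pdf mX mY OX OY r).
    { eapply Rle_trans; [|exact Pl].
      repeat apply Rmult_le_pos; try lra; left; try apply Rpower_pos; apply exp_pos. }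
    unfold kern.
    eapply Rle_trans.
    { apply Rmult_le_compat; [left; auto | exact Ppos | exact HQ | exact Pu]. }
    right. ring. }
  assert (Hex : forall a b, 0 < a -> a <= b -> ex_RInt h a b).
  { intros a b Ha0 Hab. apply ex_RInt_pos. lra. intros r Hr. apply hint_cont; auto; lra. }
  destruct (improper_sup h (fun a => 0 < a) (at_right 0) (cu * Rpower gbar (- k)))
    as [l [Hl [HlM Hlow]]].
  - apply at_right0_le.
  - exists 1. lra.
  - intros a t Ha0 Hat. apply Hhpos. lra.
  - intros a b Ha0 Hab. apply Hex; auto.
  - intros a b Ha0 Hab.
    assert (Hb : 0 < d * gbar * c) by (apply Rmult_lt_0_compat; [apply Rmult_lt_0_compat|]; lra).
    assert (Hexk : ex_RInt (kern (2 * mX) (4 / alpha) (d * gbar * c)) a b).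
    { apply ex_RInt_pos. lra. intros; now apply kern_cont. }
    eapply Rle_trans.
    { apply (RInt_le h (fun r => (Kq * K2) * kern (2 * mX) (4 / alpha) (d * gbar * c) r)); auto.
      apply ex_RInt_scal_R; auto.
      intros x Hx. apply Hhup. lra. }
    rewrite RInt_scal_R by auto.
    eapply Rle_trans.
    { apply Rmult_le_compat_l. apply Rmult_le_pos; lra. apply Hkb; auto; lra. }
    replace (2 * mX / (4 / alpha)) with k by (unfold k; field; lra).
    replace (d * gbar * c) with ((d * c) * gbar) by ring.
    rewrite <- Rpower_mult_distr by (try apply Rmult_lt_0_compat; lra).
    unfold cu. right. ring.
  - assert (HEQ : EQ mX mY OX OY alpha gbar d = l).
    { unfold EQ. apply (is_RInt_gen_unique h l Hl). }
    rewrite HEQ. split; auto.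
    set (r0 := Rpower gbar (- (alpha / 4))).
    assert (Hr0 : 0 < r0) by apply Rpower_pos.
    assert (Hr01 : r0 <= 1).
    { unfold r0. rewrite <- (Rpower_O gbar) by lra. apply Rle_Rpower; lra. }
    assert (Hr0k : Rpower r0 (2 * mX) = Rpower gbar (- k)).
    { unfold r0. rewrite Rpower_mult. f_equal. unfold k. field. }
    assert (Hr0a : Rpower r0 (4 / alpha) = / gbar).
    { unfold r0. rewrite Rpower_mult.
      replace (- (alpha / 4) * (4 / alpha)) with (- (1)) by (field; lra).
      rewrite Rpower_Ropp, Rpower_1 by lra. reflexivity. }
    eapply Rle_trans; [| apply (Hlow (r0 / 2) r0); lra].
    set (m := q0 * K1 * exp (- (mX / OX))).
    assert (Hm : 0 < m) by (unfold m; apply Rmult_lt_0_compat; [apply Rmult_lt_0_compat|apply exp_pos]; auto).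
    eapply Rle_trans; [| apply (RInt_le (fun r => m * Rpower r (2 * mX - 1)) h (r0 / 2) r0)].
    + rewrite RInt_scal_R by (apply ex_RInt_pow; lra).
      rewrite RInt_pow by lra.
      replace (r0 / 2) with (r0 * / 2) by (unfold Rdiv; ring).
      rewrite <- Rpower_mult_distr by lra.
      rewrite Hr0k. unfold cl, m. right. field. lra.
    + lra.
    + apply ex_RInt_scal_R. apply ex_RInt_pow. lra.
    + apply Hex; lra.
    + intros r Hr. assert (Hr1 : 0 < r) by lra.
      unfold h, hint.
      destruct (Hpdf r Hr1) as [Pl Pu].
      assert (HQ : q0 <= Qfun (sqrt (2 * d * snr mX mY OX OY alpha gbar r))).
      { unfold q0. apply Qfun_mono. split. apply sqrt_pos.
        apply sqrt_le_1_alt. apply Rmult_le_compat_l. lra.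
        rewrite (Hsnr r Hr1).
        assert (HR : Rpower r (4 / alpha) <= / gbar).
        { rewrite <- Hr0a. apply Rle_Rpower_l. apply Rlt_le, Rdiv_lt_0_compat; lra. lra. }
        assert (0 <= gbar * c) by (apply Rmult_le_pos; lra).
        apply (Rmult_le_compat_l (gbar * c)) in HR; auto.
        replace (gbar * c * / gbar) with c in HR by (field; lra). exact HR. }
      assert (HE : exp (- (mX / OX)) <= exp (- (mX / OX) * r ^ 2)).
      { apply exp_le. assert (r ^ 2 <= 1) by nra. assert (0 < mX / OX) by (apply Rdiv_lt_0_compat; lra). nra. }
      assert (HP : 0 < Rpower r (2 * mX - 1)) by apply Rpower_pos.
      unfold m.
      replace (q0 * K1 * exp (- (mX / OX)) * Rpower r (2 * mX - 1))
        with (q0 * (K1 * Rpower r (2 * mX - 1) * exp (- (mX / OX)))) by ring.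
      apply Rmult_le_compat; auto. lra.
      apply Rmult_le_pos; [apply Rmult_le_pos|]; lra || (left; apply exp_pos).
      eapply Rle_trans; [|exact Pl].
      apply Rmult_le_compat_l. apply Rmult_le_pos; lra. auto.
Qed.

Lemma sum_bounds (mX mY OX OY alpha : R) (d2 : nat -> R) : 0 < mX -> 0 < mY -> 0 < OX -> 0 < OY ->
  0 < alpha -> forall n, (1 <= n)%nat -> (forall j, (1 <= j <= n)%nat -> 0 < d2 j) ->
  exists cl cu, 0 < cl /\ 0 < cu /\ forall gbar, 1 <= gbar ->
   cl * Rpower gbar (- (alpha / 2 * mX)) <= sum_n_m (fun j => EQ mX mY OX OY alpha gbar (d2 j)) 1 n
   /\ sum_n_m (fun j => EQ mX mY OX OY alpha gbar (d2 j)) 1 n <= cu * Rpower gbar (- (alpha / 2 * mX)).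
Proof.
  intros HX HY HOX HOY Ha n. induction n as [|n IH]; intros Hn Hd.
  - lia.
  - destruct (EQ_bounds mX mY OX OY alpha (d2 (S n)) HX HY HOX HOY Ha) as [c1 [c2 [Hc1 [Hc2 Hb]]]].
    { apply Hd. lia. }
    destruct (Nat.eq_dec n 0) as [->|Hn0].
    + exists c1, c2. split; auto. split; auto. intros gbar Hg.
      rewrite sum_n_n. apply Hb; auto.
    + destruct IH as [cl [cu [Hcl [Hcu HIH]]]].
      { lia. }
      { intros j Hj. apply Hd. lia. }
      exists (cl + c1), (cu + c2). split; [lra|]. split; [lra|].
      intros gbar Hg. rewrite sum_n_Sm by lia.
      destruct (HIH gbar Hg) as [A1 A2]. destruct (Hb gbar Hg) as [B1 B2].
      change (plus (sum_n_m (fun j => EQ mX mY OX OY alpha gbar (d2 j)) 1 n)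
                   (EQ mX mY OX OY alpha gbar (d2 (S n))))
        with (sum_n_m (fun j => EQ mX mY OX OY alpha gbar (d2 j)) 1 n
              + EQ mX mY OX OY alpha gbar (d2 (S n))).
      split; lra.
Qed.

Theorem corollary3 (mX mY OX OY alpha d1 : R) (d3 : nat) (d2 : nat -> R) :
  0 < mX -> 0 < mY -> 0 < OX -> 0 < OY -> 0 < alpha -> 0 < d1 ->
  (1 <= d3)%nat ->
  (forall j : nat, (1 <= j <= d3)%nat -> 0 < d2 j) ->
  is_lim (fun gbar => - (ln (Pber mX mY OX OY alpha d1 d3 d2 gbar) / ln gbar))
         p_infty (alpha / 2 * mX).
Proof.
  intros HX HY HOX HOY Ha Hd1 Hd3 Hd2.
  destruct (sum_bounds mX mY OX OY alpha d2 HX HY HOX HOY Ha d3 Hd3 Hd2)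
    as [cl [cu [Hcl [Hcu Hb]]]].
  set (k := alpha / 2 * mX) in *.
  set (Km := Rabs (ln d1) + Rabs (ln cl) + Rabs (ln cu)).
  intros P [eps HP].
  exists (exp (Km / eps) + 1). intros g Hg.
  apply HP.
  assert (He : 0 < eps) by (destruct eps; simpl; lra).
  assert (HKm : 0 <= Km) by (unfold Km; generalize (Rabs_pos (ln d1)) (Rabs_pos (ln cl)) (Rabs_pos (ln cu)); lra).
  assert (Hg1 : 1 <= g) by (generalize (exp_pos (Km / eps)); lra).
  assert (HL : Km / eps < ln g).
  { rewrite <- (ln_exp (Km / eps)). apply ln_increasing. apply exp_pos. lra. }
  assert (HL0 : 0 < ln g).
  { assert (0 <= Km / eps) by (apply Rdiv_le_0_compat; lra). lra. }
  assert (HKmL : Km < eps * ln g).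
  { apply (Rmult_lt_compat_l eps) in HL; auto.
    replace (eps * (Km / eps)) with Km in HL by (field; lra). lra. }
  destruct (Hb g Hg1) as [B1 B2].
  set (Ssum := sum_n_m (fun j => EQ mX mY OX OY alpha g (d2 j)) 1 d3) in *.
  set (R0 := Rpower g (- k)) in *.
  assert (HR0 : 0 < R0) by (unfold R0; apply Rpower_pos).
  assert (HS : 0 < Ssum) by (generalize (Rmult_lt_0_compat _ _ Hcl HR0); lra).
  assert (HlnR : ln R0 = - k * ln g) by (unfold R0; apply ln_Rpower).
  assert (L1 : ln cl - k * ln g <= ln Ssum).
  { rewrite <- (ln_le (cl * R0) Ssum) by (auto; apply Rmult_lt_0_compat; auto).
    rewrite ln_mult by auto. lra. }
  assert (L2 : ln Ssum <= ln cu - k * ln g).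
  { assert (H := ln_le Ssum (cu * R0) HS B2). rewrite ln_mult in H by auto. lra. }
  assert (HP1 : Pber mX mY OX OY alpha d1 d3 d2 g = d1 * Ssum) by reflexivity.
  set (u := ln d1 + ln Ssum + k * ln g).
  assert (Hu : Rabs u <= Km).
  { unfold Km, u. apply Rabs_le. 
    generalize (Rle_abs (ln d1)) (Rle_abs (- ln d1)) (Rle_abs (ln cl)) (Rle_abs (- ln cl))
      (Rle_abs (ln cu)) (Rle_abs (- ln cu)).
    rewrite !Rabs_Ropp. intros. split; lra. }
  assert (Heq : - (ln (Pber mX mY OX OY alpha d1 d3 d2 g) / ln g) + - k = - u / ln g).
  { rewrite HP1, ln_mult by auto. unfold u. field. lra. }
  unfold ball; simpl; unfold AbsRing_ball, abs, minus, plus, opp; simpl.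
  fold k. rewrite Heq.
  unfold Rdiv. rewrite Rabs_mult, Rabs_Ropp, Rabs_inv, (Rabs_pos_eq (ln g)) by lra.
  apply (Rmult_lt_reg_r (ln g)); [lra|].
  rewrite Rmult_assoc, Rinv_l, Rmult_1_r by lra. lra.
Qed.
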